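(* Let $\xi\in\mathbb{Z}[\lambda]$ and let $m$ be a positive integer. Define the order of $\xi$ modulo $m$ by $$t(\xi)=\min\{k\ge 1:\ \omega^k\xi\equiv \xi \pmod{m\mathbb{Z}[\lambda]}\}.$$ Define $T(m)$ for positive integers $m$ by $T(1)=1$ and the following rules. (i) If $\gcd(n,m)=1$ then $T(nm)=\operatorname{lcm}(T(n),T(m))$. (ii) If $m=p^e$ with $p$ prime and $e\ge1$: - $p$ ramified: $T(2^e)=2^{e+1}(2-1)=2^{e+1}$, and $T(11^e)=11^e\cdot 10$; - $p$ inert: $T(p^e)=p^{e-1}(p^2+p+1)$ if $p\equiv 0$ or $2 \pmod 3$, and $T(p^e)=p^{e-1}(p^2+p+1)/3$ if $p\equiv1\pmod 3$; - $p$ splits: $T(p^e)=p^{e-1}(p^2-1)/3$; - $p$ splits completely: $T(p^e)=p^{e-1}(p-1)$ if $p\equiv 2\pmod 3$, and $T(p^e)=p^{e-1}(p-1)/3$ if $p\equiv 1\pmod 3$. Then $t(\xi)$ divides $T(m)$.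
   Context: Let $\lambda$ be the unique real root of $f(x)=x^3+x^2+x-1$, and $\omega=\lambda^3$ (so $\omega=1-\lambda-\lambda^2$, a unit of $\mathbb{Z}[\lambda]$ of norm $1$). $\mathbb{Z}[\lambda]=\{a_0+a_1\lambda+a_2\lambda^2: a_i\in\mathbb{Z}\}$ is the full ring of integers of $\mathbb{Q}(\lambda)$; the discriminant of $f$ is $-44$. Classification of primes $p$: $p$ is ramified if $p\in\{2,11\}$ (for these, $f$ has a repeated root mod $p$: $f\equiv (x+1)^3 \bmod 2$ and $f\equiv (x+3)^2(x+6)\bmod 11$). For any other prime $p$, $f \bmod p$ is squarefree and $p$ is called inert, splits, or splits completely according as $f\bmod p$ factors into $1$, $2$, or $3$ irreducible factors over $\mathbb{F}_p$. *)

(* Defs.v *)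
From HB Require Import structures.
From mathcomp Require Import all_boot all_order all_algebra.
Set Implicit Arguments. Unset Strict Implicit. Unset Printing Implicit Defensive.
Import Order.TTheory GRing.Theory Num.Theory.

Local Open Scope ring_scope.

(* Elements of Z[lambda] = Z[x]/(x^3+x^2+x-1), written a0 + a1*lambda + a2*lambda^2,
   represented by their coordinate triple (a0, a1, a2) in the Z-basis 1, lambda, lambda^2. *)
Definition Zl := (int * int * int)%type.

Definition Zl_c0 (x : Zl) : int := x.1.1.
Definition Zl_c1 (x : Zl) : int := x.1.2.
Definition Zl_c2 (x : Zl) : int := x.2.

(* Multiplication, using lambda^3 = 1 - lambda - lambda^2 and lambda^4 = -1 + 2 lambda. *)
Definition Zl_mul (x y : Zl) : Zl :=
  let a0 := Zl_c0 x in let a1 := Zl_c1 x in let a2 := Zl_c2 x in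
  let b0 := Zl_c0 y in let b1 := Zl_c1 y in let b2 := Zl_c2 y in
  let c0 := a0 * b0 in
  let c1 := a0 * b1 + a1 * b0 in
  let c2 := a0 * b2 + a1 * b1 + a2 * b0 in
  let c3 := a1 * b2 + a2 * b1 in
  let c4 := a2 * b2 in
  (c0 + c3 - c4, c1 - c3 + 2 * c4, c2 - c3).

Definition Zl_one : Zl := (1, 0, 0).

(* omega = lambda^3 = 1 - lambda - lambda^2 *)
Definition omega : Zl := (1, -1, -1).

Definition Zl_pow (x : Zl) (k : nat) : Zl := iter k (Zl_mul x) Zl_one.

Definition Zl_cong (m : nat) (x y : Zl) : Prop :=
  [/\ (m%:Z %| Zl_c0 x - Zl_c0 y)%Z, (m%:Z %| Zl_c1 x - Zl_c1 y)%Z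
    & (m%:Z %| Zl_c2 x - Zl_c2 y)%Z].

Definition is_order_mod (m : nat) (xi : Zl) (t : nat) : Prop :=
  [/\ (0 < t)%N, Zl_cong m (Zl_mul (Zl_pow omega t) xi) xi
    & forall k : nat, (0 < k)%N -> Zl_cong m (Zl_mul (Zl_pow omega k) xi) xi -> (t <= k)%N].

Definition f_mod (p : nat) : {poly 'F_p} := 'X^3 + 'X^2 + 'X - 1.

Definition nfactors_mod (p k : nat) : Prop :=
  exists s : seq {poly 'F_p},
    [/\ size s = k, all (fun q => q \is monic) s,
        (forall q, q \in s -> irreducible_poly q) & \prod_(q <- s) q = f_mod p].

Definition inert (p : nat) : Prop :=
  [/\ prime p, p <> 2%N, p <> 11%N & nfactors_mod p 1].
Definition splits (p : nat) : Prop :=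
  [/\ prime p, p <> 2%N, p <> 11%N & nfactors_mod p 2].
Definition splits_completely (p : nat) : Prop :=
  [/\ prime p, p <> 2%N, p <> 11%N & nfactors_mod p 3].

Definition T_rules (T : nat -> nat) : Prop :=
  T 1%N = 1%N /\
      (forall n m : nat, (0 < n)%N -> (0 < m)%N -> coprime n m ->
          T (n * m)%N = lcmn (T n) (T m)) /\
      (forall e : nat, (0 < e)%N -> T (2 ^ e)%N = (2 ^ e.+1)%N) /\
      (forall e : nat, (0 < e)%N -> T (11 ^ e)%N = (11 ^ e * 10)%N) /\
      (forall p e : nat, (0 < e)%N -> inert p ->
          T (p ^ e)%N = (if p %% 3 == 1 then p ^ e.-1 * (p ^ 2 + p + 1) %/ 3
                         else p ^ e.-1 * (p ^ 2 + p + 1))%N) /\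
      (forall p e : nat, (0 < e)%N -> splits p ->
          T (p ^ e)%N = (p ^ e.-1 * (p ^ 2 - 1) %/ 3)%N) /\
      (forall p e : nat, (0 < e)%N -> splits_completely p ->
          T (p ^ e)%N = (if p %% 3 == 1 then p ^ e.-1 * (p - 1) %/ 3
                         else p ^ e.-1 * (p - 1))%N).

(* Main.v *)
Require Import Defs.
From HB Require Import structures.
From mathcomp Require Import all_boot all_order all_algebra all_field.
From mathcomp Require Import ring zify.
Set Implicit Arguments. Unset Strict Implicit. Unset Printing Implicit Defensive.
Import Order.TTheory GRing.Theory Num.Theory.
Local Open Scope ring_scope.

Definition Fz : {poly int} := 'X^3 + 'X^2 + 'X - 1.
Definition inI (m : int) (P : {poly int}) :=
  exists A B, P = m%:P * A + Fz * B.

Lemma inI0 m : inI m 0.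
Proof. by exists 0, 0; rewrite !mulr0 addr0. Qed.

Lemma inID m P Q : inI m P -> inI m Q -> inI m (P + Q).
Proof.
move=> [A [B ->]] [C [D ->]]; exists (A + C), (B + D); ring.
Qed.

Lemma inIN m P : inI m P -> inI m (- P).
Proof. move=> [A [B ->]]; exists (- A), (- B); ring. Qed.

Lemma inIB m P Q : inI m P -> inI m Q -> inI m (P - Q).
Proof. by move=> h1 h2; apply: inID => //; apply: inIN. Qed.

Lemma inIMl m P Q : inI m P -> inI m (Q * P).
Proof. move=> [A [B ->]]; exists (Q * A), (Q * B); ring. Qed.

Lemma inIMr m P Q : inI m P -> inI m (P * Q).
Proof. by move=> h; rewrite mulrC; apply: inIMl. Qed.

Lemma inIF m Q : inI m (Fz * Q).
Proof. by exists 0, Q; rewrite mulr0 add0r. Qed.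

Lemma inIC m Q : inI m (m%:P * Q).
Proof. by exists Q, 0; rewrite mulr0 addr0. Qed.

Lemma inI_dvd (m n : int) P : (m %| n)%Z -> inI n P -> inI m P.
Proof.
move=> /dvdzP [c ->] [A [B ->]]; exists (c%:P * A), B.
rewrite polyCM; ring.
Qed.

Lemma inI1 P : inI 1 P.
Proof. by exists P, 0; rewrite mulr0 addr0 mul1r. Qed.

Lemma inIM a b P Q : inI a P -> inI b Q -> inI (a * b) (P * Q).
Proof.
move=> [A [B ->]] [C [D ->]]; exists (A * C), (A * a%:P * D + B * (b%:P * C + Fz * D)).
rewrite polyCM; ring.
Qed.

Lemma inI_sum m (I : finType) (G : I -> {poly int}) :
  (forall i, inI m (G i)) -> inI m (\sum_i G i).
Proof.
move=> h; elim/big_ind: _ => //; [exact: inI0 | exact: inID].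
Qed.

Lemma inI_geom m k j : inI m ('X^k - 1) -> inI m ('X^(k * j) - 1).
Proof.
move=> h; elim: j => [|j IH]; first by rewrite muln0 expr0 subrr; apply: inI0.
have -> : 'X^(k * j.+1) - 1 = 'X^(k * j) * ('X^k - 1) + ('X^(k * j) - 1 : {poly int}).
  by rewrite mulnS exprD; ring.
by apply: inID => //; apply: inIMl.
Qed.

Lemma inI_lift (m : int) (p k : nat) : (p%:Z %| m)%Z -> inI m ('X^k - 1) ->
  inI (m * p%:Z) ('X^(k * p) - 1).
Proof.
move=> hpm h.
have E : 'X^(k * p) - 1 = ('X^k - 1) *
     ((\sum_(i < p) (('X^k) ^+ i - 1)) + p%:Z%:P : {poly int}).
  rewrite exprM subrX1; congr (_ * _).
  have -> : (p%:Z%:P : {poly int}) = 1 *+ p by rewrite -natz polyC_natr.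
  by rewrite sumrB sumr_const card_ord subrK.
rewrite E; apply: inIM => //.
apply: inID; last by rewrite -[p%:Z%:P]mulr1; apply: inIC.
apply: inI_sum => i; apply: (inI_dvd hpm); rewrite -exprM; exact: inI_geom.
Qed.

Lemma inI_crt (a b : nat) P : coprime a b -> inI a P -> inI b P -> inI (a * b)%N P.
Proof.
move=> cab [A [B EA]] [C [D EB]].
have [u [v huv]] := Bezoutz a b.
have g1 : gcdz a b = 1 by rewrite /gcdz /= (eqP cab).
rewrite g1 in huv.
exists (u%:P * C + v%:P * A), (u%:P * a%:Z%:P * D + v%:P * b%:Z%:P * B).
have -> : P = (u * a + v * b)%:P * P by rewrite huv mul1r.
rewrite polyCD !polyCM PoszM polyCM.
have e1 : u%:P * a%:Z%:P * P = u%:P * a%:Z%:P * (b%:Z%:P * C + Fz * D) by rewrite -EB.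
have e2 : v%:P * b%:Z%:P * P = v%:P * b%:Z%:P * (a%:Z%:P * A + Fz * B) by rewrite -EA.
rewrite mulrDl e1 e2; ring.
Qed.

Definition psi (x : Zl) : {poly int} :=
  (Zl_c0 x)%:P + (Zl_c1 x)%:P * 'X + (Zl_c2 x)%:P * 'X^2.

Lemma psi_mul m x y : inI m (psi (Zl_mul x y) - psi x * psi y).
Proof.
case: x => [[a0 a1] a2]; case: y => [[b0 b1] b2].
rewrite /psi /Zl_mul /Zl_c0 /Zl_c1 /Zl_c2 /=.
set c3 := a1 * b2 + a2 * b1.
exists 0, (- (c3%:P + (a2 * b2)%:P * ('X - 1))).
rewrite mulr0 add0r /Fz /c3.
rewrite !(polyCD, polyCM, polyCB, polyCN).
rewrite polyC1.
ring.
Qed.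

Lemma psi_cong (m : nat) x y : Zl_cong m x y -> inI m (psi x - psi y).
Proof.
case: x => [[a0 a1] a2]; case: y => [[b0 b1] b2].
rewrite /Zl_cong /psi /Zl_c0 /Zl_c1 /Zl_c2 /= => -[/dvdzP[c0 e0] /dvdzP[c1 e1] /dvdzP[c2 e2]].
exists (c0%:P + c1%:P * 'X + c2%:P * 'X^2), 0.
have -> : a0%:P + a1%:P * 'X + a2%:P * 'X^2 - (b0%:P + b1%:P * 'X + b2%:P * 'X^2)
  = (a0 - b0)%:P + (a1 - b1)%:P * 'X + (a2 - b2)%:P * 'X^2 :> {poly int}.
  rewrite !polyCB; ring.
rewrite e0 e1 e2 !polyCM; ring.
Qed.

Lemma aux (R : nzRingType) : leq (size ('X^2 + 'X - 1 : {poly R})) 3.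
Proof.
rewrite -addrA; apply: (leq_trans (size_polyD _ _)); rewrite geq_max size_polyXn /=.
apply: (leq_trans (size_polyD _ _)); rewrite geq_max size_polyX size_polyN size_poly1 //.
Qed.
Lemma monF (R : nzRingType) : ('X^3 + 'X^2 + 'X - 1 : {poly R}) \is monic.
Proof.
rewrite -[_ - 1]addrA -addrA monicE lead_coefDl ?lead_coefXn // size_polyXn addrA.
exact: aux.
Qed.
Lemma sizeF (R : nzRingType) : size ('X^3 + 'X^2 + 'X - 1 : {poly R}) = 4%N.
Proof.
rewrite -[_ - 1]addrA -addrA size_polyDl ?size_polyXn // ?addrA; exact: aux.
Qed.

Lemma Fz_monic : Fz \is monic. Proof. exact: monF. Qed.
Lemma size_Fz : size Fz = 4%N. Proof. exact: sizeF. Qed.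

Lemma psi_size x : leq (size (psi x)) 3.
Proof.
rewrite /psi !mul_polyC; apply: (leq_trans (size_polyD _ _)); rewrite geq_max.
apply/andP; split; last by rewrite (leq_trans (size_scale_leq _ _)) // size_polyXn.
apply: (leq_trans (size_polyD _ _)); rewrite geq_max.
apply/andP; split; first by rewrite (leq_trans (size_polyC_leq1 _)).
by rewrite (leq_trans (size_scale_leq _ _)) // size_polyX.
Qed.

Lemma cong_psi (m : nat) x y : inI m (psi x - psi y) -> Zl_cong m x y.
Proof.
move=> [A [B E]].
set D := psi x - psi y in E.
have sD : leq (size D) 3.
  apply: (leq_trans (size_polyD _ _)); rewrite geq_max size_polyN !psi_size //.
have eA := Pdiv.IdomainMonic.divp_eq Fz_monic A.
set Q := A %/ Fz in eA; set R := A %% Fz in eA.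
have sR : leq (size R) 3 by rewrite -ltnS -size_Fz ltn_modp monic_neq0 // Fz_monic.
have E2 : D - (m%:Z)%:P * R = (B + m%:Z%:P * Q) * Fz by rewrite E eA; ring.
have hz : B + m%:Z%:P * Q = 0.
  apply/eqP; apply: contraT => nz.
  have : size ((B + m%:Z%:P * Q) * Fz) = (size (B + m%:Z%:P * Q) + 4).-1
    by rewrite size_Mmonic ?Fz_monic ?size_Fz.
  rewrite -E2 => h.
  have : leq (size (D - (m%:Z)%:P * R)) 3.
    apply: (leq_trans (size_polyD _ _)); rewrite geq_max size_polyN sD /=.
    by rewrite mul_polyC (leq_trans (size_scale_leq _ _)).
  rewrite h; case: (size _) (size_poly_gt0 (B + m%:Z%:P * Q)) => [|k]; first by rewrite nz.
  by rewrite addSn /= addnC.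
move: E2; rewrite hz mul0r => /eqP; rewrite subr_eq0 => /eqP ED.
have hc : forall i, (m%:Z %| D`_i)%Z by move=> i; rewrite ED coefCM dvdz_mulr.
move: (hc 0%N) (hc 1%N) (hc 2%N); rewrite /D /psi !(coefB, coefN, coefD, coefCM, coefC, coefX, coefXn) /=.
rewrite !mulr0 !mulr1 !addr0 !add0r.
by move=> *; split.
Qed.

Lemma inI_congM m a b c d : inI m (a - b) -> inI m (c - d) -> inI m (a * c - b * d).
Proof.
move=> h1 h2; have -> : a * c - b * d = a * (c - d) + (a - b) * d by ring.
by apply: inID; [apply: inIMl | apply: inIMr].
Qed.

Lemma psi_omega m : inI m (psi omega - 'X^3).
Proof.
have -> : psi omega - 'X^3 = Fz * (-1).
  rewrite /psi /omega /Zl_c0 /Zl_c1 /Zl_c2 /Fz /= polyCN polyC1; ring.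
exact: inIF.
Qed.

Lemma psi_pow m k : inI m (psi (Zl_pow omega k) - 'X^(3 * k)).
Proof.
elim: k => [|k IH].
  have -> : psi (Zl_pow omega 0) - 'X^(3 * 0) = 0.
    by rewrite /psi /Zl_pow /= /Zl_one /Zl_c0 /Zl_c1 /Zl_c2 /= muln0 expr0 !mul0r !addr0 subrr.
  exact: inI0.
have -> : psi (Zl_pow omega k.+1) - 'X^(3 * k.+1) =
  (psi (Zl_mul omega (Zl_pow omega k)) - psi omega * psi (Zl_pow omega k))
  + (psi omega * psi (Zl_pow omega k) - 'X^3 * 'X^(3 * k)).
  by rewrite mulnS exprD /Zl_pow iterS; ring.
apply: inID; first exact: psi_mul.
exact: inI_congM (psi_omega m) IH.
Qed.

Lemma psi_powM m k xi : inI m (psi (Zl_mul (Zl_pow omega k) xi) - 'X^(3 * k) * psi xi).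
Proof.
have -> : psi (Zl_mul (Zl_pow omega k) xi) - 'X^(3 * k) * psi xi =
  (psi (Zl_mul (Zl_pow omega k) xi) - psi (Zl_pow omega k) * psi xi)
  + (psi (Zl_pow omega k) * psi xi - 'X^(3 * k) * psi xi) by ring.
apply: inID; first exact: psi_mul.
by apply: inI_congM; [apply: psi_pow | rewrite subrr; apply: inI0].
Qed.

Lemma final (T : nat -> nat) (m : nat) (xi : Zl) (t : nat)
  (good : inI m ('X^(3 * T m) - 1)) (ht : is_order_mod m xi t) : (t %| T m)%N.
Proof.
case: ht => t0 Ht Hmin.
set Y := psi xi.
have H1 : inI m ('X^(3 * t) * Y - Y).
  have := psi_cong Ht; move=> h.
  have -> : 'X^(3 * t) * Y - Y = (psi (Zl_mul (Zl_pow omega t) xi) - Y)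
     - (psi (Zl_mul (Zl_pow omega t) xi) - 'X^(3 * t) * Y) by ring.
  by apply: inIB => //; apply: psi_powM.
have Hq : forall q, inI m ('X^(3 * t * q) * Y - Y).
  elim=> [|q IH]; first by rewrite muln0 expr0 mul1r subrr; apply: inI0.
  have -> : 'X^(3 * t * q.+1) * Y - Y = 'X^(3 * t) * ('X^(3 * t * q) * Y - Y)
     + ('X^(3 * t) * Y - Y) by rewrite mulnS exprD; ring.
  by apply: inID => //; apply: inIMl.
set K := T m.
have HK : inI m ('X^(3 * K) * Y - Y).
  have -> : 'X^(3 * K) * Y - Y = ('X^(3 * K) - 1) * Y by ring.
  by apply: inIMr.
set r := (K %% t)%N.
have eK : (3 * K = 3 * r + 3 * t * (K %/ t)%N)%N.
  by rewrite {1}(divn_eq K t) /r mulnDr addnC mulnA mulnAC.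
have Hr : inI m ('X^(3 * r) * Y - Y).
  have -> : 'X^(3 * r) * Y - Y = ('X^(3 * K) * Y - Y)
     - 'X^(3 * r) * ('X^(3 * t * (K %/ t)%N) * Y - Y) by rewrite eK exprD; ring.
  by apply: inIB => //; apply: inIMl.
have Hc : Zl_cong m (Zl_mul (Zl_pow omega r) xi) xi.
  apply: cong_psi.
  have -> : psi (Zl_mul (Zl_pow omega r) xi) - psi xi =
    (psi (Zl_mul (Zl_pow omega r) xi) - 'X^(3 * r) * Y) + ('X^(3 * r) * Y - Y) by rewrite /Y; ring.
  by apply: inID => //; apply: psi_powM.
rewrite /dvdn -/K -/r; apply/eqP.
case: (posnP r) => [//|rp].
have := Hmin r rp Hc; rewrite leqNgt ltn_pmod //.
Qed.

Section Gen.
Variable F : fieldType.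
Local Notation fF := ('X^3 + 'X^2 + 'X - 1 : {poly F}).

Lemma fF_neq0 : fF != 0.
Proof. by rewrite -size_poly_eq0 sizeF. Qed.

Lemma irr_noroot (q : {poly F}) x : irreducible_poly q -> size q != 2%N -> ~~ root q x.
Proof.
move=> iq s2; apply/negP => /factor_theorem [r Er].
have d : ('X - x%:P) %| q by rewrite Er dvdp_mull.
have := apply_irredp iq _ d; rewrite size_XsubC => /(_ isT) /eqp_size.
by rewrite size_XsubC => h; move: s2; rewrite -h.
Qed.

Lemma monic_div (q r : {poly F}) x : q = r * ('X - x%:P) -> q \is monic -> q != 0 ->
  r \is monic /\ size r = (size q).-1.
Proof.
move=> E mq nq; have nr : r != 0 by apply: contraNneq nq => r0; rewrite E r0 mul0r.
split.
  by move: mq; rewrite E !monicE lead_coefM lead_coefXsubC mulr1.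
by rewrite E size_Mmonic ?monicXsubC // size_XsubC addn2.
Qed.

Lemma monic_size2 (q : {poly F}) : q \is monic -> size q = 2%N -> q = 'X - (- q`_0)%:P.
Proof.
move=> mq sq; apply/polyP => i; rewrite polyCN opprK coefD coefX coefC.
case: i => [|[|i]] /=.
- by rewrite add0r.
- by rewrite addr0; move: mq; rewrite monicE lead_coefE sq => /eqP.
- by rewrite addr0 nth_default // sq.
Qed.

End Gen.

Section Fin.
Variable F : finFieldType.
Local Notation fF := ('X^3 + 'X^2 + 'X - 1 : {poly F}).

Lemma case_split :
  [\/ irreducible_poly fF,
      exists a q2, [/\ q2 \is monic, size q2 = 3%N, irreducible_poly q2 & fF = q2 * ('X - a%:P)]
    | exists a b c, fF = ('X - c%:P) * ('X - b%:P) * ('X - a%:P)].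
Proof.
case: (pickP (root fF)) => [a ra|nr]; last first.
  apply: Or31; apply: cubic_irreducible; first by rewrite sizeF.
  by move=> x; rewrite nr.
have [q1 E1] := factor_theorem _ _ ra.
have [m1 s1] := monic_div E1 (monF _) (fF_neq0 _).
rewrite sizeF /= in s1.
case: (pickP (root q1)) => [b rb|nr]; last first.
  apply: Or32; exists a, q1; split => //.
  apply: cubic_irreducible; first by rewrite s1.
  by move=> x; rewrite nr.
have [q2 E2] := factor_theorem _ _ rb.
have q10 : q1 != 0 by rewrite -size_poly_eq0 s1.
have [m2 s2] := monic_div E2 m1 q10.
rewrite s1 /= in s2.
apply: Or33; exists a, b, (- q2`_0).
by rewrite E1 E2 -(monic_size2 m2 s2).
Qed.

End Fin.

Lemma irr_root_dvd (F : fieldType) (K : fieldExtType F) (q g : {poly F}) (x : K) :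
  irreducible_poly q -> root (map_poly (in_alg K) q) x ->
  root (map_poly (in_alg K) g) x -> q %| g.
Proof.
move=> iq rq rg.
have hg : root (map_poly (in_alg K) (gcdp q g)) x.
  by rewrite gcdp_map root_gcd rq rg.
have s1 : size (gcdp q g) != 1%N.
  apply/negP => /eqP s1.
  have /size1_polyC E := eq_leq s1.
  move: hg; rewrite E map_polyC rootC /= => /eqP.
  rewrite /= -(rmorph0 (in_alg K)) => c0; have {}c0 := fmorph_inj (in_alg K) c0.
  by move: s1; rewrite E c0 size_poly0.
have := apply_irredp iq s1 (dvdp_gcdl q g).
move=> eq; rewrite -(eqp_dvdl _ eq); exact: dvdp_gcdr.
Qed.

Lemma map_F (aR rR : nzRingType) (f : {rmorphism aR -> rR}) :
  map_poly f ('X^3 + 'X^2 + 'X - 1) = 'X^3 + 'X^2 + 'X - 1.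
Proof. by rewrite !(rmorphB, rmorphD) /= !map_polyXn map_polyX rmorph1. Qed.
Lemma map_XN (aR rR : nzRingType) (f : {rmorphism aR -> rR}) N :
  map_poly f ('X^N - 1) = 'X^N - 1.
Proof. by rewrite !(rmorphB, rmorphD) /= !map_polyXn rmorph1. Qed.

Section FinP.
Variable F : finFieldType.
Variable p : nat.
Hypothesis pp : prime p.
Hypothesis cF : #|F| = p.
Local Notation fF := ('X^3 + 'X^2 + 'X - 1 : {poly F}).

Lemma chF : p \in [pchar F].
Proof. by apply: (card_finPcharP (n := 1%N)); rewrite ?expn1. Qed.
Lemma chK (K : fieldExtType F) : p \in [pchar K].
Proof. by rewrite pchar_lalg chF. Qed.
Lemma frob (K : fieldExtType F) (y : K) :
  (y ^+ 3 + y ^+ 2 + y - 1) ^+ p = (y ^+ p) ^+ 3 + (y ^+ p) ^+ 2 + y ^+ p - 1.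
Proof. by rewrite -!(pFrobenius_autE (chK K)) !(rmorphB, rmorphD, rmorphXn, rmorph1). Qed.
Lemma card_extF (K : fieldExtType F) : #|FinFieldExtType K| = (p ^ \dim {: K})%N.
Proof.
have := card_vspace (fullv : {vspace finvect_type K}).
by rewrite card_vspacef cF.
Qed.

Lemma irr_root_pow (q : {poly F}) : irreducible_poly q ->
  exists K : fieldExtType F, exists2 x : K, root (map_poly (in_alg K) q) x &
    x ^+ (p ^ (size q).-1) = x.
Proof.
move=> iq; have [K dK [x rx _]] := irredp_FAdjoin iq.
exists K, x => //.
have := expf_card (x : FinFieldExtType K).
by rewrite card_extF dK.
Qed.

Lemma hornerF (x : F) : fF.[x] = x ^+ 3 + x ^+ 2 + x - 1.
Proof. by rewrite !hornerE. Qed.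

Lemma fermat (a : F) : a != 0 -> a ^+ (p - 1) = 1.
Proof.
move=> a0; have := expf_card a; rewrite cF.
have -> : p = (p - 1).+1 by rewrite subn1 prednK // prime_gt0.
by rewrite subSS subn0 exprS => h; apply: (mulfI a0); rewrite mulr1.
Qed.

Lemma root_neq0 (a : F) : root fF a -> a != 0.
Proof.
move=> ra; apply: contraTneq ra => ->; rewrite /root hornerF.
by rewrite expr0n /= expr0n /= !add0r oppr_eq0 oner_eq0.
Qed.

Lemma no_double (x : F) (r : {poly F}) : (22%:R : F) != 0 ->
  fF != ('X - x%:P) * ('X - x%:P) * r.
Proof.
move=> h22; apply/negP => /eqP E.
have r1 : x ^+ 3 + x ^+ 2 + x - 1 = 0.
  by rewrite -hornerF E !hornerE subrr !mul0r.
have d : fF^`() = 'X^2 *+ 3 + 'X *+ 2 + 1.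
  by rewrite !(derivB, derivD) !derivXn derivX derivC subr0 expr1.
have r2 : x ^+ 2 *+ 3 + x *+ 2 + 1 = 0.
  have : fF^`().[x] = 0.
    rewrite E -mulrA derivM derivXsubC !(hornerD, hornerM, hornerX, hornerN, hornerC) subrr.
    by rewrite !(mul0r, mulr0, addr0).
  by rewrite d !(hornerD, hornerMn, hornerXn, hornerX, hornerC).
have : (22%:R : F) = (2 * x ^+ 2 + 7 * x + 3) * (x ^+ 2 *+ 3 + x *+ 2 + 1)
                    - (6 * x + 19) * (x ^+ 3 + x ^+ 2 + x - 1).
  ring.
by rewrite r1 r2 !mulr0 subrr => h; move: h22; rewrite h eqxx.
Qed.

Lemma case3 (a b c : F) : (22%:R : F) != 0 ->
  fF = ('X - c%:P) * ('X - b%:P) * ('X - a%:P) -> fF %| 'X^(p - 1) - 1.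
Proof.
move=> h22 E.
have rt : forall z, root fF z -> root ('X^(p - 1) - 1) z.
  move=> z rz; rewrite /root !hornerE fermat ?subrr //; exact: root_neq0.
have ra : root fF a by rewrite E !rootM !root_XsubC eqxx ?orbT ?orTb.
have rb : root fF b by rewrite E !rootM !root_XsubC eqxx ?orbT ?orTb.
have rc : root fF c by rewrite E !rootM !root_XsubC eqxx ?orbT ?orTb.
have ab : a != b.
  apply/eqP => eab; move: (no_double a (('X - c%:P)) h22); rewrite E eab.
  by move/negP; apply; apply/eqP; ring.
have ac : a != c.
  apply/eqP => eac; move: (no_double a (('X - b%:P)) h22); rewrite E eac.
  by move/negP; apply; apply/eqP; ring.
have bc : b != c.
  apply/eqP => ebc; move: (no_double b (('X - a%:P)) h22); rewrite E ebc.
  by move/negP; apply; apply/eqP; ring.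
have := @uniq_roots_dvdp _ ('X^(p - 1) - 1) [:: c; b; a].
rewrite !big_cons big_nil mulr1 mulrA -E; apply.
  by rewrite /= !rt.
rewrite uniq_rootsE /= !inE negb_or eq_sym bc /= eq_sym ac /=.
by rewrite eq_sym ab.
Qed.

Lemma fF0 : fF.[0] != 0.
Proof. by rewrite hornerF expr0n /= expr0n /= !add0r oppr_eq0 oner_eq0. Qed.

Lemma case2 (a : F) (q : {poly F}) : size q = 3%N -> irreducible_poly q ->
  fF = q * ('X - a%:P) -> fF %| 'X^(p ^ 2 - 1) - 1.
Proof.
move=> sq iq E.
have ra : root fF a by rewrite E rootM root_XsubC eqxx orbT.
have d1 : ('X - a%:P) %| 'X^(p ^ 2 - 1) - 1.
  rewrite dvdp_XsubCl /root !hornerE.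
  have -> : (p ^ 2 - 1 = (p - 1) * (p + 1))%N.
    have := prime_gt0 pp; nia.
  by rewrite exprM fermat ?root_neq0 // expr1n subrr.
have d2 : q %| 'X^(p ^ 2 - 1) - 1.
  have [K [x rx ex]] := irr_root_pow iq.
  rewrite sq /= in ex.
  apply: (irr_root_dvd iq rx).
  have x0 : x != 0.
    apply/negP => /eqP x0; move: rx; rewrite x0 -(rmorph0 (in_alg K)).
    rewrite /root horner_map => /eqP h.
    have q0 : q.[0] = 0 by apply: (fmorph_inj (in_alg K)); rewrite h rmorph0.
    by move: fF0; rewrite E hornerM q0 mul0r eqxx.
  rewrite map_XN /root !hornerE.
  have : x ^+ (p ^ 2 - 1) * x = 1 * x.
    by rewrite -exprSr subn1 prednK ?ex ?mul1r // expn_gt0 prime_gt0.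
  by move/(mulIf x0) => ->; rewrite subrr.
rewrite E Gauss_dvdp ?d1 ?d2 // coprimep_XsubC.
by apply: irr_noroot => //; rewrite sq.
Qed.

Lemma case1 : irreducible_poly fF -> fF %| 'X^(p ^ 2 + p + 1) - 1.
Proof.
move=> iF; have [K [x rx ex]] := irr_root_pow iF.
rewrite sizeF /= in ex.
set mF := map_poly (in_alg K) fF in rx.
have EmF : mF = 'X^3 + 'X^2 + 'X - 1 by rewrite /mF map_F.
have rK : forall y : K, root mF y = (y ^+ 3 + y ^+ 2 + y - 1 == 0).
  by move=> y; rewrite EmF /root !hornerE.
have p0 := prime_gt0 pp.
have rfrob : forall y : K, root mF y -> root mF (y ^+ p).
  by move=> y; rewrite !rK -frob => /eqP ->; rewrite expr0n eqn0Ngt p0.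
have nofix : forall y : K, root mF y -> y ^+ p = y -> False.
  move=> y ry yp.
  have G := finField_genPoly F.
  have : root (map_poly (in_alg K) ('X^#|F| - 'X)) y.
    by rewrite rmorphB /= map_polyXn map_polyX /root !hornerE cF yp subrr.
  rewrite G map_prod_XsubC -(big_map (in_alg K) xpredT (fun z => 'X - z%:P)).
  rewrite root_prod_XsubC => /mapP [a _ ya].
  move: ry; rewrite ya /mF fmorph_root => ra.
  by move: (irr_noroot a iF); rewrite sizeF ra => /(_ isT).
set y2 := x ^+ p; set y3 := y2 ^+ p.
have r2 : root mF y2 by apply: rfrob.
have r3 : root mF y3 by apply: rfrob.
have n12 : x != y2 by apply/eqP => h; apply: (nofix x rx); rewrite -/y2 -h.
have n23 : y2 != y3 by apply/eqP => h; apply: (nofix y2 r2); rewrite -/y3 -h.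
have n13 : x != y3.
  apply/eqP => h; apply: (nofix x rx).
  have : x ^+ (p ^ 3) = y3 ^+ p.
    by rewrite /y3 /y2 -!exprM; congr (_ ^+ _); rewrite !expnS expn0 muln1 mulnA.
  by rewrite ex -h => e; rewrite -e.
have D := @uniq_roots_dvdp _ mF [:: x; y2; y3].
have {D} D : \prod_(z <- [:: x; y2; y3]) ('X - z%:P) %| mF.
  apply: D; first by rewrite /= rx r2 r3.
  by rewrite uniq_rootsE /= !inE negb_or n12 n13 n23.
have EP : \prod_(z <- [:: x; y2; y3]) ('X - z%:P) = mF.
  apply/eqP; rewrite -eqp_monic ?monic_prod_XsubC ?EmF ?monF //.
  by rewrite -dvdp_size_eqp -?EmF // size_prod_XsubC EmF sizeF.
have h0 : (\prod_(z <- [:: x; y2; y3]) ('X - z%:P)).[0] = mF.[0] by rewrite EP.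
rewrite EmF !big_cons big_nil !hornerE in h0.
have e1 : x * y2 * y3 = 1.
  move: h0 => h1; have h2 : (- x) * (- y2) * (- y3) * 1 = 0 ^+ 3 + 0 ^+ 2 - 1 := h1.
  rewrite !expr0n /= !add0r in h2; rewrite -[1]opprK -h2; ring.
apply: (irr_root_dvd iF rx); rewrite map_XN /root !hornerE.
rewrite -mulnn !exprD exprM expr1 -/y2 -/y3.
have -> : y3 * y2 * x = x * y2 * y3 by ring.
by rewrite e1 subrr.
Qed.

End FinP.

Section Special.
Variable F : finFieldType.
Local Notation fF := ('X^3 + 'X^2 + 'X - 1 : {poly F}).

Lemma no_root3 : #|F| = 3%N -> forall a : F, ~~ root fF a.
Proof.
move=> cF a; apply/negP => ra.
have e3 : (3%:R : F) = 0 by apply: pcharf0; apply: (chF (p := 3)).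
have ea : a ^+ 3 = a by rewrite -{1}cF expf_card.
have h : a ^+ 3 + a ^+ 2 + a - 1 = 0 by rewrite -(hornerF a); exact/eqP.
have S1 : a ^+ 2 + 2 * a - 1 = 0 by rewrite -h ea; ring.
have eb : (a + 1) ^+ 3 = a + 1.
  have -> : (a + 1) ^+ 3 = a ^+ 3 + 3%:R * (a ^+ 2 + a) + 1 by ring.
  by rewrite e3 mul0r addr0 ea.
have b0 : a + 1 = 0.
  have -> : a + 1 = (a + 1) ^+ 3 - (a + 1) * (a ^+ 2 + 2 * a - 1) - (a + 1) by ring.
  by rewrite eb S1 mulr0 subr0 subrr.
have : (1 : F) = 3%:R - (a + 1) ^+ 2 + (a ^+ 2 + 2 * a - 1) by ring.
rewrite e3 b0 S1 expr0n /= subrr addr0 => /eqP.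
by rewrite oner_eq0.
Qed.

Lemma base11F : #|F| = 11%N -> fF %| 'X^110 - 1.
Proof.
move=> cF.
have ch := chF (p := 11) isT cF.
have e11 : (11%:R : F) = 0 by apply: pcharf0.
have nz : forall n, (0 < n < 11)%N -> (n%:R : F) != 0.
  move=> n /andP [n0 n11]; rewrite -(dvdn_pcharf ch).
  by apply/negP => /(dvdn_leq n0); rewrite leqNgt n11.
have E : fF = ('X - (8%:R : F)%:P) ^+ 2 * ('X - (5%:R : F)%:P).
  have e11p : (11%:R : {poly F}) = 0 by rewrite -polyC_natr e11.
  have -> : ('X - (8%:R : F)%:P) ^+ 2 * ('X - (5%:R : F)%:P)
      = fF + 11%:R * (- 2%:R * 'X^2 + 13%:R * 'X - 29%:R).
    rewrite !polyC_natr; ring.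
  by rewrite e11p mul0r addr0.
have f8 : (8%:R : F) ^+ 10 = 1 by apply: (fermat (p := 11)) => //; apply: nz.
have f5 : (5%:R : F) ^+ 10 = 1 by apply: (fermat (p := 11)) => //; apply: nz.
have d1 : ('X - (8%:R : F)%:P) * ('X - (5%:R : F)%:P) %| 'X^10 - 1.
  have := @uniq_roots_dvdp F ('X^10 - 1) [:: 8%:R; 5%:R].
  rewrite !big_cons big_nil mulr1; apply.
    by rewrite /= /root !hornerE f8 f5 subrr eqxx.
  rewrite uniq_rootsE /= !inE andbT.
  have : (8%:R - 5%:R : F) != 0 by rewrite -natrB // nz.
  by rewrite subr_eq0.
have chP : 11%N \in [pchar {poly F}] by rewrite pchar_poly.
have eX : ('X^10 - 1 : {poly F}) ^+ 11 = 'X^110 - 1.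
  by rewrite -(pFrobenius_autE chP) rmorphB rmorph1 /= (pFrobenius_autE chP) -exprM.
rewrite -eX E.
apply: (dvdp_trans _ (dvdp_exp2r 11 d1)).
rewrite exprMn; apply: dvdp_mul; first by apply: dvdp_exp2l.
by rewrite -{1}(expr1 ('X - _)); apply: dvdp_exp2l.
Qed.

End Special.

Lemma map_BM (aR rR : nzRingType) (f : {rmorphism aR -> rR}) (A B C : {poly aR}) :
  map_poly f (A - B * C) = map_poly f A - map_poly f B * map_poly f C.
Proof. by rewrite rmorphB rmorphM. Qed.

Lemma transfer (p : nat) (N : nat) : prime p ->
  f_mod p %| 'X^N - 1 -> inI p ('X^N - 1).
Proof.
move=> pp /dvdpP [H EH].
pose phi := (intr : int -> 'F_p).
have mF : map_poly phi Fz = f_mod p.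
  rewrite /Fz /f_mod; have h := @map_F _ _ (GRing.RMorphism.clone _ _ phi _). exact: h.
have mX : map_poly phi ('X^N - 1) = 'X^N - 1.
  have h := @map_XN _ _ (GRing.RMorphism.clone _ _ phi _); exact: h.
pose H' : {poly int} := \poly_(i < size H) (val (H`_i))%:Z.
have mH : map_poly phi H' = H.
  apply/polyP => i; rewrite coef_map_id0; last exact: (mulr0z 1).
  rewrite coef_poly; case: ifP => hi; first exact: natr_Zp.
  rewrite [H`_i]nth_default; first exact: (mulr0z 1).
  by rewrite leqNgt hi.
set P := 'X^N - 1 - H' * Fz.
have mP : map_poly phi P = 0.
  have h : map_poly phi P = map_poly phi ('X^N - 1) - map_poly phi H' * map_poly phi Fz
    := @map_BM _ _ (GRing.RMorphism.clone _ _ phi _) ('X^N - 1) H' Fz.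
  by rewrite h mX mH mF EH subrr.
have dP : forall i, (p%:Z %| P`_i)%Z.
  move=> i; rewrite (dvdz_pcharf (pchar_Fp pp)).
  have : (map_poly phi P)`_i = 0 by rewrite mP coef0.
  rewrite coef_map_id0; last exact: (mulr0z 1).
  move=> h; apply/eqP; exact: h.
pose A : {poly int} := \poly_(i < size P) (P`_i %/ p%:Z)%Z.
have EP : P = p%:Z%:P * A.
  apply/polyP => i; rewrite coefCM coef_poly; case: ifP => hi.
    by rewrite mulrC divzK.
  by rewrite mulr0 nth_default // leqNgt hi.
exists A, H'; rewrite -EP /P; ring.
Qed.

Lemma base11 : inI 11 ('X^110 - 1).
Proof.
apply: (transfer (p := 11)) => //.
exact: (base11F (card_Fp (isT : prime 11))).
Qed.

Lemma base (p : nat) : prime p -> p <> 2%N -> p <> 11%N ->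
  [\/ inert p /\ inI p ('X^(p ^ 2 + p + 1) - 1),
      [/\ splits p, p <> 3%N & inI p ('X^(p ^ 2 - 1) - 1)]
    | splits_completely p /\ inI p ('X^(p - 1) - 1)].
Proof.
move=> pp p2 p11.
have cF := card_Fp pp.
have h22 : (22%:R : 'F_p) != 0.
  rewrite -(dvdn_pcharf (pchar_Fp pp)) (_ : 22 = 2 * 11)%N // Euclid_dvdM //.
  by rewrite !dvdn_prime2 //; apply/norP; split; apply/eqP.
case: (case_split 'F_p) => [iF | [a [q [mq sq iq E]]] | [a [b [c E]]]].
- apply: Or31; split; last exact: (transfer pp (case1 pp cF iF)).
  split => //; exists [:: f_mod p]; split => //.
  + by rewrite /= monF.
  + by move=> q; rewrite mem_seq1 => /eqP ->.
  + by rewrite big_cons big_nil mulr1.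
- apply: Or32; split; last exact: (transfer pp (case2 pp cF sq iq E)).
  + split => //; exists [:: q; 'X - a%:P]; split => //.
    * by rewrite /= mq monicXsubC.
    * move=> r; rewrite !inE => /orP [/eqP -> // | /eqP ->]; exact: irredp_XsubC.
    * by rewrite !big_cons big_nil mulr1.
  + move=> e3; have c3 : #|'F_p| = 3%N by rewrite cF e3.
    have := no_root3 c3 a; rewrite E rootM root_XsubC eqxx orbT //.
- apply: Or33; split; last exact: (transfer pp (case3 pp cF h22 E)).
  split => //; exists [:: 'X - c%:P; 'X - b%:P; 'X - a%:P]; split => //.
  + by rewrite /= !monicXsubC.
  + by move=> r; rewrite !inE => /orP [/eqP -> | /orP [/eqP -> | /eqP ->]]; exact: irredp_XsubC.
  + by rewrite !big_cons big_nil mulr1 mulrA.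
Qed.

Lemma base2 : inI 2 ('X^4 - 1).
Proof.
exists ('X - 1), ('X - 1); rewrite /Fz polyC_natr; ring.
Qed.

Lemma lift_pow p k e : prime p -> inI p ('X^k - 1) -> inI (p ^ e.+1)%N ('X^(k * p ^ e) - 1).
Proof.
move=> pp h; elim: e => [|e IH]; first by rewrite expn0 expn1 muln1.
have d : (p%:Z %| (p ^ e.+1)%N%:Z)%Z by apply/dvdzP; exists (p ^ e)%N%:Z; rewrite -PoszM expnS mulnC.
have := inI_lift d IH.
rewrite -PoszM -expnSr -mulnA -expnSr; exact.
Qed.

Lemma finish p k e M : prime p -> inI p ('X^k - 1) -> (k * p ^ e %| M)%N ->
  inI (p ^ e.+1)%N ('X^M - 1).
Proof.
move=> pp h /dvdnP [j ->]; rewrite mulnC; apply: inI_geom; exact: lift_pow.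
Qed.

Lemma good_pp (T : nat -> nat) (hT : T_rules T) p e : prime p ->
  inI (p ^ e.+1)%N ('X^(3 * T (p ^ e.+1)%N) - 1).
Proof.
case: hT => [T1 [Tc [T2 [T11 [Ti [Ts Tsc]]]]]] pp.
have p0 : (0 < p)%N by apply: prime_gt0.
case: (eqVneq p 2%N) => [->|p2].
  apply: (@finish 2 4 e) => //; first exact: base2.
  rewrite T2 // !expnS; apply/dvdnP; exists 3%N; lia.
case: (eqVneq p 11%N) => [->|p11].
  apply: (@finish 11 110 e) => //; first exact: base11.
  rewrite T11 // expnS; apply/dvdnP; exists 3%N; lia.
case: (base pp (elimN eqP p2) (elimN eqP p11)) => [[hi hb]|[hs p3 hb]|[hs hb]].
- apply: (finish (e:=e) pp hb); rewrite Ti //= mulnC.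
  case: ifP => h3; last by apply: dvdn_mull.
  have d3 : (3 %| p ^ e * (p ^ 2 + p + 1))%N.
    apply: dvdn_mull; apply/dvdnP; exists ((p %/ 3) * (p %/ 3) * 3 + (p %/ 3) * 3 + 1)%N.
    move/eqP: h3 => h3; have := divn_eq p 3; rewrite h3; nia.
  by rewrite [(3 * _)%N]mulnC divnK.
- apply: (finish (e:=e) pp hb); rewrite Ts //= mulnC.
  have d3 : (3 %| p ^ e * (p ^ 2 - 1))%N.
    apply: dvdn_mull.
    have : (p %% 3 != 0)%N.
      apply/negP => /eqP h; have : (3 %| p)%N by rewrite /dvdn h.
      by rewrite dvdn_prime2 // => /eqP E3; apply: p3; rewrite -E3.
    have := divn_eq p 3; have := ltn_pmod p (isT : (0 < 3)%N).
    case: (p %% 3)%N => [|[|[|]]] //= _ E _; apply/dvdnP.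
      by exists ((p %/ 3) * (p %/ 3) * 3 + (p %/ 3) * 2)%N; nia.
    by exists ((p %/ 3) * (p %/ 3) * 3 + (p %/ 3) * 4 + 1)%N; nia.
  by rewrite [(3 * _)%N]mulnC divnK.
- apply: (finish (e:=e) pp hb); rewrite Tsc //= mulnC.
  case: ifP => h3; last by apply: dvdn_mull.
  have d3 : (3 %| p ^ e * (p - 1))%N.
    apply: dvdn_mull; apply/dvdnP; exists (p %/ 3)%N.
    move/eqP: h3 => h3; have := divn_eq p 3; rewrite h3; lia.
  by rewrite [(3 * _)%N]mulnC divnK.
Qed.

Lemma good (T : nat -> nat) (hT : T_rules T) m : (0 < m)%N -> inI m ('X^(3 * T m) - 1).
Proof.
elim/ltn_ind: m => m IH m0.
have hT' := hT; case: hT' => [T1 [Tc _]].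
case: (eqVneq m 1%N) => [->|m1]; first exact: inI1.
have m2 : (1 < m)%N by rewrite ltn_neqAle eq_sym m1 m0.
have pp := pdiv_prime m2.
have [m' cp Em] := pfactor_coprime pp m0.
set e := logn (pdiv m) m in Em.
have e0 : (0 < e)%N by rewrite logn_gt0 mem_primes pp m0 pdiv_dvd.
have m'0 : (0 < m')%N by move: m0; rewrite Em muln_gt0 => /andP[].
have pe1 : (1 < pdiv m ^ e)%N by rewrite -(exp1n e) ltn_exp2r // prime_gt1.
have lt : (m' < m)%N by rewrite Em -{1}(muln1 m') ltn_pmul2l.
have cpe : coprime (pdiv m ^ e) m' by rewrite coprime_pexpl.
rewrite Em mulnC (Tc _ _ _ m'0 cpe); last by rewrite expn_gt0 prime_gt0.
apply: inI_crt => //.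
- have [e' ->] : exists e', e = e'.+1 by exists e.-1; rewrite prednK.
  have h := good_pp hT e' pp.
  have /dvdnP [j ->] : (3 * T (pdiv m ^ e'.+1) %| 3 * lcmn (T (pdiv m ^ e'.+1)) (T m'))%N
    by rewrite dvdn_pmul2l // dvdn_lcml.
  by rewrite mulnC; apply: inI_geom.
- have h := IH m' lt m'0.
  have /dvdnP [j ->] : (3 * T m' %| 3 * lcmn (T (pdiv m ^ e)) (T m'))%N
    by rewrite dvdn_pmul2l // dvdn_lcmr.
  by rewrite mulnC; apply: inI_geom.
Qed.

Theorem proposition2 (T : nat -> nat) (hT : T_rules T)
    (m : nat) (hm : (0 < m)%N) (xi : Zl) (t : nat)
    (ht : is_order_mod m xi t) :
  (t %| T m)%N.
Proof. exact: (final (good hT hm) ht). Qed.
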